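(* Let $G$ be a finite abstract simplicial complex with connection matrix $L$. Let $p(G)$ and $n(G)$ be the number of positive and negative eigenvalues of $L$ (counted with multiplicity), and let $b(G)$ and $f(G)$ be the number of even-dimensional and odd-dimensional simplices of $G$, respectively. Then $b(G)=p(G)$ and $f(G)=n(G)$. Consequently $\chi(G)=p(G)-n(G)$.
   Context: A finite abstract simplicial complex $G$ is a finite set of non-empty finite sets closed under taking non-empty subsets; its elements are simplices, and $\dim(x)=|x|-1$. The connection matrix $L$ of $G$ is the symmetric matrix indexed by simplices with $L(x,y)=1$ if $x\cap y\neq\emptyset$ and $0$ otherwise. The Euler characteristic is $\chi(G)=\sum_{x\in G}(-1)^{\dim(x)}$. *)

(* Defs.v *)
From mathcomp Require Import all_boot all_order all_algebra.
Set Implicit Arguments. Unset Strict Implicit. Unset Printing Implicit Defensive.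
Import Order.TTheory GRing.Theory Num.Theory.
Local Open Scope ring_scope.

Definition simplicial_complex (V : finType) (G : {set {set V}}) : Prop :=
  set0 \notin G /\
  forall x y : {set V}, x \in G -> y \subset x -> y != set0 -> y \in G.

Definition sdim (V : finType) (x : {set V}) : nat := #|x|.-1.

Definition connection_matrix (R : nzRingType) (V : finType) (G : {set {set V}})
  : 'M[R]_#|G| :=
  \matrix_(i, j) (((enum_val i :&: enum_val j) != set0)%:R : R).

Definition euler_char (V : finType) (G : {set {set V}}) : int :=
  \sum_(x in G) (-1) ^+ sdim x.

Definition b_count (V : finType) (G : {set {set V}}) : nat :=
  #|[set x in G | ~~ odd (sdim x)]|.
Definition f_count (V : finType) (G : {set {set V}}) : nat :=
  #|[set x in G | odd (sdim x)]|.

(* The eigenvalues of a square matrix over an algebraically closed field,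
   listed with (algebraic) multiplicity: the roots of its characteristic
   polynomial, char_poly A = \prod_(z <- eigenvalues A) ('X - z). *)
Definition eigenvalues (C : closedFieldType) (n : nat) (A : 'M[C]_n) : seq C :=
  sval (closed_field_poly_normal (char_poly A)).

Definition pos_eig (C : numClosedFieldType) (n : nat) (A : 'M[C]_n) : nat :=
  count (fun z => 0 < z) (eigenvalues A).
Definition neg_eig (C : numClosedFieldType) (n : nat) (A : 'M[C]_n) : nat :=
  count (fun z => z < 0) (eigenvalues A).

(* Main.v *)
Require Import Defs.
From mathcomp Require Import all_boot all_order all_algebra.
Set Implicit Arguments. Unset Strict Implicit. Unset Printing Implicit Defensive.
Import Order.TTheory GRing.Theory Num.Theory.
Local Open Scope ring_scope.
Local Open Scope sesquilinear_scope.

Lemma alt_sum (R : numDomainType) (V : finType) (z x : {set V}) :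
  \sum_(w : {set V} | (z \subset w) && (w \subset x)) (-1) ^+ #|w|
  = (z == x)%:R * (-1) ^+ #|z| :> R.
Proof.
have [<-|nzx] := eqVneq z x.
  rewrite mul1r (big_pred1 z) // => w /=.
  by rewrite eqEsubset; case: (z \subset w); case: (w \subset z).
rewrite mul0r.
have [szx|nszx] := boolP (z \subset x); last first.
  rewrite big_pred0 // => w; apply/negP => /andP[h1 h2].
  by move: nszx; rewrite (subset_trans h1 h2).
have : z \proper x by rewrite properEneq nzx.
case/properP => _ [a ax az].
pose t (w : {set V}) := if a \in w then w :\ a else a |: w.
have tK : involutive t.
  move=> w; rewrite /t; case: (boolP (a \in w)) => aw.
    by rewrite !inE eqxx /= setD1K.
  by rewrite setU11 setU1K.
set S := \sum_(w | _) _.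
have : S = - S.
  have e1 (w : {set V}) : (z \subset a |: w) = (z \subset w).
    apply/subsetP/subsetP => h y yz; last by rewrite !inE h ?orbT.
    have := h y yz; rewrite !inE => /orP[/eqP ya|//].
    by move: az; rewrite -ya yz.
  have e2 (w : {set V}) : (z \subset w :\ a) = (z \subset w).
    apply/subsetP/subsetP => h y yz; first by have := h y yz; rewrite !inE => /andP[].
    rewrite !inE h // andbT; apply/eqP => ya; by move: az; rewrite -ya yz.
  have e3 (w : {set V}) : (a |: w \subset x) = (w \subset x).
    by rewrite subUset sub1set ax.
  have e4 (w : {set V}) : a \in w -> (w :\ a \subset x) = (w \subset x).
    by move=> aw; rewrite -{2}(setD1K aw) subUset sub1set ax.
  rewrite {1}/S (reindex_inj (inv_inj tK)) /= /S -sumrN.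
  apply: eq_big => w.
    by rewrite /t; case: (boolP (a \in w)) => aw; rewrite ?e1 ?e2 ?e3 ?e4.
  move=> _; rewrite /t; case: (boolP (a \in w)) => aw.
    by rewrite [in RHS](cardsD1 a w) aw exprS mulN1r opprK.
  by rewrite cardsU1 aw exprS mulN1r.
move/eqP; rewrite -subr_eq0 opprK -mulr2n mulrn_eq0 /= => /eqP //.
Qed.

Section Inertia.
Variable C : numClosedFieldType.

Lemma quad_diag n (v d : 'rV[C]_n) :
  (v *m diag_mx d *m v ^t*) 0 0 = \sum_i d 0 i * (v 0 i * (v 0 i)^*).
Proof.
rewrite mxE; apply: eq_bigr => i _; rewrite mul_mx_diag !mxE.
by rewrite -mulrA mulrCA.
Qed.

Lemma tC_unit n (M : 'M[C]_n) : M \in unitmx -> M ^t* \in unitmx.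
Proof. by rewrite map_unitmx unitmx_tr. Qed.

Lemma rank_rs n (S : {set 'I_n}) (N : 'M[C]_n) : N \in unitmx ->
  \rank (rowsub (fun k : 'I_#|S| => enum_val k) N) = #|S|.
Proof.
move=> Nu; rewrite rowsubE mxrankMfree ?row_free_unit //.
apply/eqP; apply/row_freeP; exists (rowsub (fun k : 'I_#|S| => enum_val k) (1%:M : 'M[C]_n))^T.
rewrite mul_rowsub_mx mul1mx; apply/matrixP => k l; rewrite !mxE.
by rewrite (inj_eq enum_val_inj) eq_sym.
Qed.

Lemma supp_rs n (S : {set 'I_n}) (M : 'M[C]_n) (u : 'rV[C]_n) :
  M \in unitmx ->
  (u <= rowsub (fun k : 'I_#|S| => enum_val k) (invmx (M ^t*)))%MS ->
  forall i, i \notin S -> (u *m M ^t*) 0 i = 0.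
Proof.
move=> Mu /submxP[x ->] i iS.
rewrite -mulmxA mul_rowsub_mx mulVmx ?tC_unit // mxE big1 // => k _.
rewrite !mxE; case: eqP => [e|]; last by rewrite mulr0.
by move: iS; rewrite -e enum_valP.
Qed.

Lemma form_split n (M D : 'M[C]_n) (u : 'rV[C]_n) :
  u *m (M ^t* *m D *m M) *m u ^t* = (u *m M ^t*) *m D *m (u *m M ^t*) ^t*.
Proof.
by rewrite trmx_mul map_mxM trmxCK !mulmxA.
Qed.

Lemma inertia_le n (M1 M2 : 'M[C]_n) (d1 d2 : 'rV[C]_n) :
  M1 \in unitmx -> M2 \in unitmx -> d2 \is a realmx ->
  M1 ^t* *m diag_mx d1 *m M1 = M2 ^t* *m diag_mx d2 *m M2 ->
  (#|[set i | (0 < d1 0 i)%R]| <= #|[set i | (0 < d2 0 i)%R]|)%N.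
Proof.
move=> M1u M2u d2r eqL.
set S1 := [set i | 0 < d1 0 i]; set T2 := [set i | 0 < d2 0 i].
set S2 := ~: T2.
pose A1 := rowsub (fun k : 'I_#|S1| => enum_val k) (invmx (M1 ^t*)).
pose A2 := rowsub (fun k : 'I_#|S2| => enum_val k) (invmx (M2 ^t*)).
have key : (A1 :&: A2)%MS == 0.
  apply/rowV0P => u; rewrite sub_capmx => /andP[u1 u2].
  have s1 := supp_rs M1u u1; have s2 := supp_rs M2u u2.
  apply/eqP/negP => /negP nu.
  set v1 := u *m M1 ^t*; set v2 := u *m M2 ^t*.
  have h := form_split M1 (diag_mx d1) u.
  rewrite eqL form_split in h.
  have := congr1 (fun X : 'M[C]_1 => X 0 0) h; rewrite !quad_diag -/v1 -/v2 => {}h.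
  have : 0 < \sum_i d1 0 i * (v1 0 i * (v1 0 i)^*).
    case: (pickP (fun i => v1 0 i != 0)) => [i vi | all0]; last first.
      case/negP: nu; apply/eqP.
      have -> : u = v1 *m invmx (M1 ^t*) by rewrite mulmxK ?tC_unit.
      have -> : v1 = 0 by apply/rowP => j; rewrite [RHS]mxE; move: (all0 j) => /= /negbFE/eqP.
      by rewrite mul0mx.
    have iS : i \in S1 by apply: contraR vi => /s1 ->; rewrite eqxx.
    rewrite (bigD1 i) //= ltr_pwDl //.
      by rewrite mulr_gt0 ?mul_conjC_gt0 //; move: iS; rewrite inE.
    apply: sumr_ge0 => j _; have [jS|jS] := boolP (j \in S1).
      by rewrite mulr_ge0 ?mul_conjC_ge0 //; apply: ltW; move: jS; rewrite inE.
    by rewrite s1 // mul0r mulr0.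
  have : \sum_i d2 0 i * (v2 0 i * (v2 0 i)^*) <= 0.
    apply: sumr_le0 => j _; have [jS|jS] := boolP (j \in S2).
      apply: mulr_le0_ge0; last exact: mul_conjC_ge0.
      move: jS; rewrite !inE real_leNgt ?real0 //; exact: (mxOverP d2r).
    by rewrite s2 // mul0r mulr0.
  by rewrite -h => /(lt_le_trans _) H /H; rewrite ltxx.
have e := mxrank_sum_cap A1 A2.
rewrite (eqP key) mxrank0 addn0 !rank_rs ?unitmx_inv ?tC_unit // in e.
have := rank_leq_col (A1 + A2)%MS; rewrite e.
have := cardsC T2; rewrite card_ord -/S2 => e2.
by rewrite -[X in (_ <= X)%N -> _]e2 leq_add2r.
Qed.
End Inertia.

Section Eig.
Variable C : numClosedFieldType.

Lemma char_poly_similar n (A P : 'M[C]_n) (D : 'M[C]_n) :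
  P \in unitmx -> A = invmx P *m D *m P -> char_poly A = char_poly D.
Proof.
move=> Pu ->; rewrite /char_poly /char_poly_mx.
set f := map_mx (@polyC C).
have fM (X Y : 'M[C]_n) : f (X *m Y) = f X *m f Y by rewrite /f map_mxM.
have h1 : f (invmx P) *m f P = 1%:M by rewrite -fM mulVmx // /f map_mx1.
have -> : 'X%:M - f (invmx P *m D *m P) = f (invmx P) *m ('X%:M - f D) *m f P.
  by rewrite mulmxBr mulmxBl !fM mul_mx_scalar -scalemxAl h1 scalemx1.
by rewrite !det_mulmx mulrAC -det_mulmx h1 det1 mul1r.
Qed.


Lemma eig_count n (A P : 'M[C]_n) (s : 'rV[C]_n) (Q : pred C) :
  P \in unitmx -> A = invmx P *m diag_mx s *m P ->
  count Q (eigenvalues A) = #|[set i | Q (s 0 i)]|.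
Proof.
move=> Pu eA.
have e1 := char_poly_similar Pu eA.
rewrite [char_poly (diag_mx s)]char_poly_trig ?diag_mx_is_trig // in e1.
have e2 : char_poly A = \prod_(z <- eigenvalues A) ('X - z%:P).
  rewrite /eigenvalues; case: closed_field_poly_normal => r /= er.
  by rewrite {1}er (monicP (char_poly_monic A)) scale1r.
have pe : perm_eq (eigenvalues A) [seq s 0 i | i <- enum 'I_n].
  apply: prod_XsubC_eq; rewrite -e2 e1 big_map big_enum /=.
  by apply: eq_bigr => i _; rewrite mxE eqxx mulr1n.
rewrite (permP pe) count_map cardsE cardE size_filter -enumT.
by apply: eq_count => i.
Qed.
End Eig.

Section Comb.
Variables (C : numClosedFieldType) (V : finType) (G : {set {set V}}).
Hypothesis hG : simplicial_complex G.

Let n := #|G|.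
Definition Kmx : 'M[C]_#|G| := \matrix_(i, j) (((enum_val j : {set V}) \subset (enum_val i : {set V}))%:R).
Definition dvec : 'rV[C]_#|G| := \row_j (- (-1) ^+ #|(enum_val j : {set V})|).

Lemma G_nz (w : {set V}) : w \in G -> w != set0.
Proof. by case: hG => h0 _ wG; apply: contraNneq h0 => <-. Qed.

Lemma G_sub (w x : {set V}) : x \in G -> w \subset x -> w != set0 -> w \in G.
Proof. by case: hG => _ h; apply: h. Qed.

Lemma conn_fact : connection_matrix C G = Kmx *m diag_mx dvec *m Kmx^T.
Proof.
apply/matrixP => i j; rewrite !mxE.
set S := enum_val i :&: enum_val j.
pose F (w : {set V}) : C :=
  (w \subset enum_val i)%:R * - (-1) ^+ #|w| * (w \subset enum_val j)%:R.
have -> : \sum_k (Kmx *m diag_mx dvec) i k * Kmx^T k j = \sum_(w in G) F w.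
  rewrite (big_enum_val F); apply: eq_bigr => k _.
  by rewrite mul_mx_diag !mxE.
have -> : \sum_(w in G) F w = - \sum_(w : {set V} | (set0 \subset w) && (w \subset S) && (w != set0)) (-1) ^+ #|w|.
  rewrite -sumrN big_mkcond [RHS]big_mkcond; apply: eq_bigr => w _.
  rewrite /F sub0set /= subsetI.
  have [wG|wG] := boolP (w \in G).
    rewrite (G_nz wG) andbT.
    by case: (w \subset enum_val i); case: (w \subset enum_val j);
      rewrite ?mul1r ?mulr1 ?mul0r ?mulr0.
  case: ifP => // /andP[/andP[wi _] wn].
  by case/negP: wG; apply: G_sub wi wn; exact: enum_valP.
have := alt_sum C set0 S; rewrite (bigD1 set0) ?sub0set //= cards0 expr0 mulr1.
move=> e; have -> : \sum_(w : {set V} | (set0 \subset w) && (w \subset S) && (w != set0)) (-1) ^+ #|w| = (set0 == S)%:R - 1 :> C.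
  by rewrite -e addrAC subrr add0r.
by rewrite opprB eq_sym; case: (set0 == S); rewrite ?subrr ?subr0.
Qed.

Definition Kinv : 'M[C]_#|G| :=
  \matrix_(i, j) (((enum_val j : {set V}) \subset (enum_val i : {set V}))%:R * (-1) ^+ #|(enum_val i : {set V})| * (-1) ^+ #|(enum_val j : {set V})|).

Lemma K_unit : Kmx \in unitmx.
Proof.
suff : Kmx *m Kinv = 1%:M by case/mulmx1_unit.
apply/matrixP => i j; rewrite !mxE.
pose H (w : {set V}) : C :=
  (w \subset enum_val i)%:R * ((enum_val j \subset w)%:R * (-1) ^+ #|w| * (-1) ^+ #|enum_val j|).
have -> : \sum_k Kmx i k * Kinv k j = \sum_(w in G) H w.
  by rewrite (big_enum_val H); apply: eq_bigr => k _; rewrite !mxE.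
have -> : \sum_(w in G) H w = \sum_(w : {set V} | (enum_val j \subset w) && (w \subset enum_val i)) (-1) ^+ #|w| * (-1) ^+ #|enum_val j|.
  rewrite big_mkcond [RHS]big_mkcond; apply: eq_bigr => w _.
  rewrite /H; have [wG|wG] := boolP (w \in G).
    by case: (w \subset enum_val i); case: (enum_val j \subset w);
      rewrite ?mul1r ?mulr1 ?mul0r ?mulr0.
  case: ifP => // /andP[jw wi].
  case/negP: wG; apply: G_sub wi _; first exact: enum_valP.
  apply: contraNneq (G_nz (enum_valP j)) => w0.
  by rewrite -subset0 -w0.
rewrite -mulr_suml alt_sum -mulrA -expr2 sqrr_sign mulr1.
by rewrite (inj_eq enum_val_inj) eq_sym.
Qed.

End Comb.

Lemma card_enum_val (V : finType) (G : {set {set V}}) (P : pred {set V}) :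
  #|[set i : 'I_#|G| | P (enum_val i)]| = #|[set x in G | P x]|.
Proof.
rewrite -(card_imset _ (@enum_val_inj _ _)).
apply: eq_card => x; rewrite [in RHS]inE; apply/imsetP/andP => [[i]|[xG Px]].
  by rewrite inE => Pi ->; split => //; exact: enum_valP.
by exists (enum_rank_in xG x); rewrite ?inE enum_rankK_in.
Qed.

Local Open Scope sesquilinear_scope.

Theorem theorem3 (C : numClosedFieldType) (V : finType) (G : {set {set V}}) :
  simplicial_complex G ->
  let L : 'M[C]_#|G| := connection_matrix C G in
  [/\ b_count G = pos_eig L,
      f_count G = neg_eig L &
      euler_char G = (pos_eig L)%:Z - (neg_eig L)%:Z].
Proof.
move=> hG L.
have Lh : L \is hermsymmx.
  apply/is_hermitianmxP; rewrite expr0 scale1r; apply/matrixP => i j.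
  by rewrite /L !mxE conjC_nat setIC.
set P := spectralmx L; set sp := spectral_diag L.
have /orthomx_spectralP eL := hermitian_normalmx Lh.
have Pu : P \in unitmx := spectral_unit L.
have spr := hermitian_spectral_diag_real Lh.
have eL2 : L = P ^t* *m diag_mx sp *m P.
  by rewrite -invmx_unitary ?spectral_unitarymx.
have KL : L = (Kmx C G)^T ^t* *m diag_mx (dvec C G) *m (Kmx C G)^T.
  rewrite /L (conn_fact C hG); congr (_ *m _ *m _); rewrite trmxK.
  by apply/matrixP => i j; rewrite !mxE conjC_nat.
have KTu : (Kmx C G)^T \in unitmx by rewrite unitmx_tr K_unit.
have dr : dvec C G \is a realmx.
  by apply/mxOverP => i j; rewrite mxE rpredN rpredX // rpredN real1.
have Nr (s : 'rV[C]_#|G|) : s \is a realmx -> - s \is a realmx.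
  by move=> sr; apply/mxOverP => i j; rewrite mxE rpredN; exact: (mxOverP sr).
have dN (s : 'rV[C]_#|G|) : diag_mx (- s) = - diag_mx s.
  by apply/matrixP => i j; rewrite !mxE mulNrn.
have pos : #|[set i | (0 < dvec C G 0 i)%R]| = #|[set i | (0 < sp 0 i)%R]|.
  apply/eqP; rewrite eqn_leq (inertia_le KTu Pu spr) ?(inertia_le Pu KTu dr) //;
  by rewrite -KL -eL2.
have neg : #|[set i | (0 < (- dvec C G) 0 i)%R]| = #|[set i | (0 < (- sp) 0 i)%R]|.
  apply/eqP; rewrite eqn_leq (inertia_le KTu Pu (Nr _ spr)) ?(inertia_le Pu KTu (Nr _ dr)) //;
  by rewrite !dN !mulmxN !mulNmx -KL -eL2.
have hpos (x : {set V}) : x \in G -> (0 < - (-1) ^+ #|x| :> C) = ~~ odd (sdim x).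
  move=> xG; rewrite /sdim; have : (0 < #|x|)%N by rewrite card_gt0 (G_nz hG).
  case: #|x| => // k _ /=; rewrite -signr_odd /=.
  by case: (odd k); rewrite /= ?expr0 ?expr1 ?opprK ?ltr01 ?oppr_gt0 ?ltr10.
have hneg (x : {set V}) : x \in G -> (0 < - - (-1) ^+ #|x| :> C) = odd (sdim x).
  move=> xG; rewrite /sdim; have : (0 < #|x|)%N by rewrite card_gt0 (G_nz hG).
  case: #|x| => // k _ /=; rewrite -signr_odd /= opprK.
  by case: (odd k); rewrite /= ?expr0 ?expr1 ?ltr01 ?oppr_gt0 ?ltr10.
have eb : b_count G = pos_eig L.
  rewrite /b_count /pos_eig (eig_count _ Pu eL) -pos -card_enum_val.
  by apply: eq_card => i; rewrite !inE mxE hpos ?enum_valP.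
have ef : f_count G = neg_eig L.
  rewrite /f_count /neg_eig (eig_count _ Pu eL).
  have -> : [set i | (sp 0 i < 0)%R] = [set i | (0 < (- sp) 0 i)%R].
    by apply/setP => i; rewrite !inE mxE oppr_gt0.
  rewrite -neg -card_enum_val.
  by apply: eq_card => i; rewrite !inE !mxE hneg ?enum_valP.
split => //; rewrite -eb -ef /euler_char /b_count /f_count.
rewrite (bigID (fun x => odd (sdim x))) /= addrC.
have cnt (Q : pred {set V}) (c : int) :
    \sum_(x in G | Q x) c = c *+ #|[set x in G | Q x]|.
  rewrite -sumr_const; apply: eq_bigl => x; by rewrite inE.
rewrite (eq_bigr (fun _ => 1)); last by move=> x /andP[_ /negbTE o]; rewrite -signr_odd o.
rewrite [X in _ + X](eq_bigr (fun _ => -1)); last by move=> x /andP[_ o]; rewrite -signr_odd o.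
by rewrite !cnt mulNrn !natz.
Qed.
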